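(* Let $E$ be a nonzero real Banach space, $S\colon E\rightrightarrows E^*$ be closed, monotone and quasidense, $\{(s_\beta,s_\beta^* )\}$ be a bounded net of elements of $G(S)$ and $(z,z^* )\in E\times E^*$. (a) If $s_\beta\to z$ in norm and $s_\beta^*\to z^*$ in $w(E^*,E)$, then $(z,z^* )\in G(S)$. (b) If $s_\beta\to z$ in $w(E,E^* )$ and $s_\beta^*\to z^*$ in norm, then $(z,z^* )\in G(S)$.
   Context: For a multifunction $S\colon E\rightrightarrows E^*$ with nonempty graph $G(S)$: closed means $G(S)$ norm-closed; monotone means $\langle s-t,s^*-t^*\rangle\ge0$ on $G(S)$; quasidense means for every $(x,x^* )\in E\times E^*$, $\inf_{(s,s^* )\in G(S)}[\tfrac12\|s-x\|^2+\tfrac12\|s^*-x^*\|^2+\langle s-x,s^*-x^*\rangle]\le0$. *)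

(* Defs.v *)
From HB Require Import structures.
From mathcomp Require Import all_boot all_order all_algebra.
From mathcomp Require Import all_classical all_reals all_analysis.
Set Implicit Arguments. Unset Strict Implicit. Unset Printing Implicit Defensive.
Import Order.TTheory GRing.Theory Num.Theory.
Import numFieldNormedType.Exports.
Local Open Scope classical_set_scope.
Local Open Scope ring_scope.

Section Defs.
Variables (R : realType) (E : normedModType R).

Definition is_dual (f : E -> R) : Prop :=
  (forall (a : R) (x y : E), f (a *: x + y) = a * f x + f y) /\ continuous f.

Definition dnorm (f : E -> R) : R :=
  sup [set `|f x| | x in [set x : E | `|x| <= 1]].

(* G(S) is norm-closed in E x E^* ; norm on the product: max/sum of norms *)
Definition graph_closed (G : set (E * (E -> R))) : Prop :=
  forall (x : E) (xs : E -> R), is_dual xs ->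
    (forall eps : R, 0 < eps -> exists s ss, G (s, ss) /\
        `|s - x| < eps /\ dnorm (fun y => ss y - xs y) < eps) ->
    G (x, xs).

Definition graph_monotone (G : set (E * (E -> R))) : Prop :=
  forall s ss t ts, G (s, ss) -> G (t, ts) -> 0 <= ss (s - t) - ts (s - t).

(* inf over (s, s') in G(S) of [ 1/2||s-x||^2 + 1/2||s'-x'||^2 + <s-x, s'-x'> ] <= 0,
   written out as: for every eps > 0 some value of the bracket is < eps *)
Definition graph_quasidense (G : set (E * (E -> R))) : Prop :=
  forall (x : E) (xs : E -> R), is_dual xs ->
    forall eps : R, 0 < eps -> exists s ss, G (s, ss) /\
      `|s - x| ^+ 2 / 2 + dnorm (fun y => ss y - xs y) ^+ 2 / 2
        + (ss (s - x) - xs (s - x)) < eps.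

Definition directed (I : Type) (le : I -> I -> Prop) : Prop :=
  (exists i : I, True) /\ (forall i, le i i) /\
  (forall i j k, le i j -> le j k -> le i k) /\
  (forall i j, exists k, le i k /\ le j k).

Definition net_norm_cvg (I : Type) (le : I -> I -> Prop) (u : I -> E) (z : E) :=
  forall eps : R, 0 < eps -> exists b0, forall b, le b0 b -> `|u b - z| < eps.

Definition net_weak_cvg (I : Type) (le : I -> I -> Prop) (u : I -> E) (z : E) :=
  forall f : E -> R, is_dual f ->
  forall eps : R, 0 < eps -> exists b0, forall b, le b0 b -> `|f (u b) - f z| < eps.

Definition net_dnorm_cvg (I : Type) (le : I -> I -> Prop) (u : I -> E -> R) (z : E -> R) :=
  forall eps : R, 0 < eps -> exists b0, forall b, le b0 b ->
    dnorm (fun y => u b y - z y) < eps.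

Definition net_weakstar_cvg (I : Type) (le : I -> I -> Prop) (u : I -> E -> R) (z : E -> R) :=
  forall x : E, forall eps : R, 0 < eps -> exists b0, forall b, le b0 b ->
    `|u b x - z x| < eps.

End Defs.

(* Main.v *)
Require Import Defs.
From HB Require Import structures.
From mathcomp Require Import all_boot all_order all_algebra.
From mathcomp Require Import all_classical all_reals all_analysis.
Import Order.TTheory GRing.Theory Num.Theory.
Import numFieldNormedType.Exports.
From mathcomp Require Import ring lra.
Set Implicit Arguments. Unset Strict Implicit.
Local Open Scope classical_set_scope.
Local Open Scope ring_scope.

Section H.
Variables (R : realType) (E : normedModType R).

Lemma lin0 (f : E -> R) : is_dual f -> f 0 = 0.
Proof.
move=> [hf _]; have := hf 1 0 0; rewrite scaler0 addr0 mul1r => h.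
lra.
Qed.

Lemma linD (f : E -> R) x y : is_dual f -> f (x + y) = f x + f y.
Proof. by move=> [hf _]; have := hf 1 x y; rewrite scale1r mul1r. Qed.

Lemma linZ (f : E -> R) a x : is_dual f -> f (a *: x) = a * f x.
Proof. by move=> hd; have := (hd.1 a x 0); rewrite addr0 (lin0 hd) addr0. Qed.

Lemma linN (f : E -> R) x : is_dual f -> f (- x) = - f x.
Proof. by move=> hd; rewrite -scaleN1r linZ // mulN1r. Qed.

Lemma linB (f : E -> R) x y : is_dual f -> f (x - y) = f x - f y.
Proof. by move=> hd; rewrite linD // linN. Qed.

Lemma dualB (f g : E -> R) : is_dual f -> is_dual g -> is_dual (fun y => f y - g y).
Proof.
move=> hf hg; split.
  by move=> a x y; rewrite hf.1 hg.1; ring.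
by move=> x; apply: cvgB; [exact: hf.2 | exact: hg.2].
Qed.

Lemma dnorm_bound (f : E -> R) x : is_dual f -> `|f x| <= dnorm f * `|x|.
Proof.
move=> hd.
have [d d0 Hd] : exists2 d : R, 0 < d & forall y : E, `|y| < d -> `|f y| < 1.
  have := hd.2 0; rewrite /continuous_at (lin0 hd) => /cvgrPdist_lt /(_ 1 ltr01).
  move=> /nbhs_norm0P [d /= d0 Hd]; exists d => // y yd.
  by have := Hd y yd; rewrite /= sub0r normrN.
have hub : has_ubound [set `|f x| | x in [set x : E | `|x| <= 1]].
  exists (2 / d) => _ [y /= y1 <-].
  have h1 : `|(d / 2) *: y| < d.
    rewrite normrZ ger0_norm ?divr_ge0 ?ltW //.
    have ny : 0 <= `|y| by [].
    nra.
  have h2 := Hd _ h1.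
  have hd2 : 0 <= d / 2 by apply: divr_ge0; apply: ltW.
  rewrite (linZ _ _ hd) normrM (ger0_norm hd2) in h2.
  rewrite ler_pdivlMr //.
  have nf : 0 <= `|f y| by [].
  nra.
have ub : forall y : E, `|y| <= 1 -> `|f y| <= dnorm f.
  by move=> y y1; apply: ub_le_sup => //; exists y.
have [->|x0] := eqVneq x 0.
  by rewrite (lin0 hd) !normr0 mulr0.
have nx : 0 < `|x| by rewrite normr_gt0.
set n := `|x|.
have u1 : `|n^-1 *: x| <= 1.
  rewrite normrZ normfV (ger0_norm (ltW nx)) mulVf //; exact: lt0r_neq0.
have := ub _ u1; rewrite (linZ _ _ hd) normrM normfV (ger0_norm (ltW nx)).
by rewrite ler_pdivrMl // mulrC.
Qed.


Lemma maxmono (G : set (E * (E -> R))) z zs :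
  (forall p, G p -> is_dual p.2) -> graph_closed G -> graph_quasidense G ->
  is_dual zs -> (forall w ws, G (w, ws) -> 0 <= zs (z - w) - ws (z - w)) ->
  G (z, zs).
Proof.
move=> Gd Gc Gq hz Hm; apply: Gc => // e e0.
have e2 : 0 < e ^+ 2 / 2 by apply: divr_gt0; rewrite ?exprn_gt0.
have [s [ss [Gs Hs]]] := Gq z zs hz _ e2.
exists s, ss; split => //.
have hs : is_dual ss := Gd _ Gs.
have := Hm _ _ Gs.
rewrite -(opprB s z) (linN _ hz) (linN _ hs) => hm.
set a := `|s - z| in Hs *; set b := dnorm _ in Hs *.
have a0 : 0 <= a by rewrite /a.
split; nra.
Qed.


Lemma ge_eps (T : R) : (forall e : R, 0 < e -> - e <= T) -> 0 <= T.
Proof.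
move=> H; rewrite leNgt; apply/negP => T0.
have := H (- T / 2); rewrite ?divr_gt0 ?oppr_gt0 //; lra.
Qed.

Lemma normle (x y : R) : `|x| <= y -> - y <= x /\ x <= y.
Proof. by rewrite ler_norml => /andP. Qed.

Lemma normlt (x y : R) : `|x| < y -> - y < x /\ x < y.
Proof. by rewrite ltr_norml => /andP. Qed.

End H.

Theorem lemma6p3 (R : realType) (E : completeNormedModType R)
  (G : set (E * (E -> R)))
  (I : Type) (le : I -> I -> Prop) (s : I -> E) (ss : I -> E -> R)
  (z : E) (zs : E -> R) :
  (exists x : E, x != 0) ->
  (forall p, G p -> is_dual p.2) ->
  (exists p, G p) ->
  graph_closed G -> graph_monotone G -> graph_quasidense G ->
  directed le ->
  (forall b, G (s b, ss b)) ->
  (exists M : R, forall b, `|s b| <= M /\ dnorm (ss b) <= M) ->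
  is_dual zs ->
  (net_norm_cvg le s z -> net_weakstar_cvg le ss zs -> G (z, zs)) /\
  (net_weak_cvg le s z -> net_dnorm_cvg le ss zs -> G (z, zs)).
Proof.
move=> _ Gd _ Gc Gm Gq [[i0 _] [_ [_ dup]]] Gs [M HM] hz.
have hs b : is_dual (ss b) := Gd _ (Gs b).
split.
- move=> Hn Hw; apply: maxmono => // w ws Gw.
  have hws : is_dual ws := Gd _ Gw.
  apply: ge_eps => e e0.
  set K := `|M| + `|dnorm ws| + 1.
  have K0 : 0 < K by rewrite /K; have := normr_ge0 M; have := normr_ge0 (dnorm ws); lra.
  have d0 : 0 < e / 3 / K by rewrite !divr_gt0.
  have [b1 Hb1] := Hn _ d0.
  have e30 : 0 < e / 3 by rewrite divr_gt0.
  have [b2 Hb2] := Hw (z - w) _ e30.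
  have [b [l1 l2]] := dup b1 b2.
  have n1 := Hb1 _ l1; have n2 := normlt (Hb2 _ l2).
  have D := Gm _ _ _ _ (Gs b) Gw.
  have E1 : s b - w = (s b - z) + (z - w) by rewrite addrA subrK.
  rewrite E1 (linD _ _ (hs b)) (linD _ _ hws) in D.
  have B1 := normle (dnorm_bound (s b - z) (hs b)).
  have B2 := normle (dnorm_bound (s b - z) hws).
  have [HM1 _] := HM b.
  have HM2 := HM b; case: HM2 => _ HM2.
  set n := `|s b - z| in n1 B1 B2.
  have nn : 0 <= n by rewrite /n.
  have kd : e / 3 / K * K = e / 3 by rewrite divfK // gt_eqF.
  have m1 : dnorm (ss b) * n <= `|M| * n.
    by apply: ler_wpM2r => //; apply: le_trans HM2 (ler_norm M).
  have m2 : dnorm ws * n <= `|dnorm ws| * n by apply: ler_wpM2r => //; exact: ler_norm.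
  have m3 : n * K <= e / 3 / K * K by apply: ler_wpM2r; [exact: ltW|exact: ltW].
  rewrite kd in m3.
  have m4 : n * K = `|M| * n + `|dnorm ws| * n + n by rewrite /K; ring.
  lra.
- move=> Hw Hn; apply: maxmono => // w ws Gw.
  have hws : is_dual ws := Gd _ Gw.
  apply: ge_eps => e e0.
  set K := `|M| + `|w| + 1.
  have K0 : 0 < K by rewrite /K; have := normr_ge0 M; have := normr_ge0 w; lra.
  have d0 : 0 < e / 2 / K by rewrite !divr_gt0.
  have [b1 Hb1] := Hn _ d0.
  have e20 : 0 < e / 2 by rewrite divr_gt0.
  have hzw := dualB hz hws.
  have [b2 Hb2] := Hw _ hzw _ e20.
  have [b [l1 l2]] := dup b1 b2.
  have n1 := Hb1 _ l1; have n2 := normlt (Hb2 _ l2).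
  have D := Gm _ _ _ _ (Gs b) Gw.
  have hg := dualB (hs b) hz.
  have B1 := normle (dnorm_bound (s b - w) hg).
  rewrite /= in B1 n2.
  rewrite !(linB _ _ (hs b)) !(linB _ _ hz) !(linB _ _ hws) in D B1 *.
  have [HM1 _] := HM b.
  have nw : `|s b - w| <= `|M| + `|w|.
    apply: le_trans (ler_normB _ _) _; rewrite lerD2r; apply: le_trans HM1 (ler_norm M).
  set n := `|s b - w| in nw B1.
  set g := dnorm _ in n1 B1.
  have nn : 0 <= n by rewrite /n.
  have kd : e / 2 / K * K = e / 2 by rewrite divfK // gt_eqF.
  have m3 : g * n <= e / 2 / K * K.
    rewrite /K in kd *; nra.
  lra.
Qed.
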